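(* Let $\mathcal{D}_n$ be a minimal DFA of a bifix-free language with state set $Q=\{0,\dots,n-1\}$ (initial state $0$, final state $n-2$, empty state $n-1$) and transition semigroup $T(n)$. Let $t,\hat{t}\in T(n)$ and $s\in\mathbf{W}^{\ge 6}_{\mathrm{bf}}(n)$. Suppose that: (1) all states $q\in Q_M$ with $qt\ne qs$ belong to $C$, where $C$ is either an orbit of $s$ or the tree of a state in $s$; (2) all states $q\in Q_M$ with $q\hat{t}\ne qs$ belong to $\hat{C}$, where $\hat{C}$ is either an orbit of $s$ or the tree of a state in $s$; (3) for some $i,j\ge 0$ the transformation $s^it^j$ focuses a colliding pair both of whose states lie in $C$. Then $C\subseteq\hat{C}$ or $\hat{C}\subseteq C$. In particular, if $C$ and $\hat{C}$ are both orbits, or both trees rooted in a state mapped by $s$ to $n-1$, then $C=\hat{C}$.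
   Context: A language is bifix-free if no word of it is a proper prefix or a proper suffix of another word of it. Transformations of $Q$ act on the right, $q(st)=(qs)t$; $T(n)$ is the semigroup of transformations induced by nonempty words. $Q_M=\{1,\dots,n-3\}$. An unordered pair $\{p,q\}$ of distinct states of $Q_M$ is colliding if there is $u\in T(n)$ with $0u=p$ and $ru=q$ for some $r\in Q_M$. A transformation $u$ focuses a pair $\{p,q\}$ if $pu=qu=r$ for a single state $r\in Q_M\cup\{n-2\}$. The underlying digraph of a transformation $s$ has vertex set $Q$ and edges $(q,qs)$; the orbit of $q$ in $s$ is its connected component, $\{p\in Q\mid ps^i=qs^j$ for some $i,j\ge0\}$; a cycle is a cycle of length at least 2 in this digraph; if $q$ does not lie in a cycle, the tree of $q$ is the underlying digraph restricted to the states $p$ having a path from $p$ to $q$. Let $\mathbf{B}_{\mathrm{bf}}(n)$ be the set of all transformations $t$ of $Q$ with $0\notin Qt$, $(n-1)t=n-1$, $(n-2)t=n-1$, and for all $j\ge1$, either $0t^j=n-1$ or $0t^j\ne qt^j$ for all $0<q<n-1$; and $\mathbf{W}^{\ge 6}_{\mathrm{bf}}(n)=\{t\in\mathbf{B}_{\mathrm{bf}}(n)\mid 0t\in\{n-2,n-1\}$, or $0t\in Q_M$ and $qt\in\{n-2,n-1\}$ for all $q\in Q_M\}$. *)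

(* Defs.v *)
(* States Q = {0,...,n-1} are 'I_n; transformations are
   functions 'I_n -> 'I_n acting on the right: q(st) = t (s q). *)
From mathcomp Require Import all_boot.
Set Implicit Arguments. Unset Strict Implicit. Unset Printing Implicit Defensive.

Section Defs.
Variables (n : nat) (A : finType) (delta : 'I_n -> A -> 'I_n).

Definition dstar (q : 'I_n) (w : seq A) : 'I_n := foldl delta q w.

Definition accepts (q : 'I_n) (w : seq A) : bool := val (dstar q w) == n - 2.

Definition bifix_free (L : seq A -> Prop) : Prop :=
  forall u v x : seq A, L u -> L v -> x != [::] ->
    v <> u ++ x /\ v <> x ++ u.

Definition bifix_min_dfa (q0 : 'I_n) : Prop :=
  [/\ val q0 = 0,
      (forall q : 'I_n, exists w, dstar q0 w = q),
      (forall p q : 'I_n, (forall w, accepts p w = accepts q w) -> p = q),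
      (forall q : 'I_n, val q = n - 1 -> forall w, accepts q w = false)
    & bifix_free (fun w => accepts q0 w)].

Definition inT (t : 'I_n -> 'I_n) : Prop :=
  exists w : seq A, w != [::] /\ forall q, t q = dstar q w.

Definition inQM (q : 'I_n) : bool := (1 <= val q) && (val q <= n - 3).

Definition colliding (p q : 'I_n) : Prop :=
  [/\ p != q, inQM p, inQM q &
    exists u, inT u /\ exists z r : 'I_n, [/\ val z = 0, inQM r &
      (u z = p /\ u r = q) \/ (u z = q /\ u r = p)]].

End Defs.

Section Trans.
Variable n : nat.

Definition focuses (u : 'I_n -> 'I_n) (p q : 'I_n) : Prop :=
  exists r : 'I_n, (inQM r \/ val r = n - 2) /\ u p = r /\ u q = r.

Definition inB (t : 'I_n -> 'I_n) : Prop :=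
  [/\ (forall q, val (t q) <> 0),
      (forall q, val q = n - 1 -> val (t q) = n - 1),
      (forall q, val q = n - 2 -> val (t q) = n - 1) &
      (forall j, 1 <= j -> forall z, val z = 0 ->
         val (iter j t z) = n - 1 \/
         forall q : 'I_n, 0 < val q < n - 1 -> iter j t z <> iter j t q)].

Definition inW (t : 'I_n -> 'I_n) : Prop :=
  inB t /\ forall z : 'I_n, val z = 0 ->
    (val (t z) = n - 2 \/ val (t z) = n - 1) \/
    (inQM (t z) /\ forall q, inQM q -> val (t q) = n - 2 \/ val (t q) = n - 1).

Definition orbit (s : 'I_n -> 'I_n) (q : 'I_n) (p : 'I_n) : Prop :=
  exists i j, iter i s p = iter j s q.

Definition in_cycle (s : 'I_n -> 'I_n) (q : 'I_n) : Prop :=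
  (exists k, 0 < k /\ iter k s q = q) /\ s q <> q.

Definition tree (s : 'I_n -> 'I_n) (q : 'I_n) (p : 'I_n) : Prop :=
  exists i, iter i s p = q.

Definition same_set (C D : 'I_n -> Prop) : Prop := forall x, C x <-> D x.

Definition is_orbit (s : 'I_n -> 'I_n) (C : 'I_n -> Prop) : Prop :=
  exists q, same_set C (orbit s q).

Definition is_tree (s : 'I_n -> 'I_n) (C : 'I_n -> Prop) : Prop :=
  exists q, ~ in_cycle s q /\ same_set C (tree s q).

Definition is_sink_tree (s : 'I_n -> 'I_n) (C : 'I_n -> Prop) : Prop :=
  exists q, [/\ val q <> n - 1, val (s q) = n - 1, ~ in_cycle s q &
                same_set C (tree s q)].

End Trans.

(* Main.v *)
Require Import Defs.
From mathcomp Require Import all_boot zify.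
From Stdlib Require Import Classical.
Set Implicit Arguments. Unset Strict Implicit.

Lemma shift (T : Type) (s : T -> T) i j x y k :
  iter i s x = iter j s y -> iter (k + i) s x = iter (k + j) s y.
Proof. by move=> H; rewrite !iterD H. Qed.

Lemma iexp (T : Type) (s : T -> T) a b x : a = b -> iter a s x = iter b s x.
Proof. by move->. Qed.

Lemma orbit_sub n (s : 'I_n -> 'I_n) a b x :
  Defs.orbit s a x -> Defs.orbit s b x -> forall y, Defs.orbit s a y -> Defs.orbit s b y.
Proof.
move=> [i [j Hx]] [k [l Hx']] y [m [o Hy]].
have e1 := shift (j+k) Hy.
have e2 := shift (o+k) Hx.
have e3 := shift (i+o) Hx'.
exists (j+k+m), (i+o+l). rewrite e1 -e3 (iexp _ _ (_ : j+k+o = o+k+j)); last by lia.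
by rewrite -e2; apply: iexp; lia.
Qed.

Lemma nest n (s : 'I_n -> 'I_n) (C D : 'I_n -> Prop) x :
  (is_orbit s C \/ is_tree s C) -> (is_orbit s D \/ is_tree s D) ->
  C x -> D x -> (forall y, C y -> D y) \/ (forall y, D y -> C y).
Proof.
move=> [[a Ea]|[a [_ Ea]]] [[b Eb]|[b [_ Eb]]] /Ea Cx /Eb Dx.
- left=> y /Ea Cy; apply/Eb; exact: (orbit_sub Cx Dx).
- right=> y /Eb [m Hy]; apply/Ea.
  case: Cx => i [j Hx]; case: Dx => k Hk.
  exists (i + m), (k + j).
  by rewrite iterD Hy -Hk -iterD addnC iterD Hx -iterD.
- left=> y /Ea [m Hy]; apply/Eb.
  case: Dx => i [j Hx]; case: Cx => k Hk.
  exists (i + m), (k + j).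
  by rewrite iterD Hy -Hk -iterD addnC iterD Hx -iterD.
- case: Cx => i Hi; case: Dx => k Hk.
  case: (leqP i k) => hik.
  + left=> y /Ea [m Hy]; apply/Eb. exists (k - i + m).
    by rewrite iterD Hy -Hi -iterD subnK.
  + right=> y /Eb [m Hy]; apply/Ea. exists (i - k + m).
    by rewrite iterD Hy -Hk -iterD subnK // ltnW.
Qed.

Section DFA.
Variables (n : nat) (A : finType) (delta : 'I_n -> A -> 'I_n) (q0 : 'I_n).
Hypothesis Hdfa : bifix_min_dfa delta q0.

Lemma dstar_cat q u v : dstar delta q (u ++ v) = dstar delta (dstar delta q u) v.
Proof. by rewrite /dstar foldl_cat. Qed.

Lemma empty_fix e : val e = n - 1 -> forall w, dstar delta e w = e.
Proof.
case: Hdfa => _ _ Hmin Hempty _ he w.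
apply: Hmin => v. rewrite /accepts -dstar_cat.
by have := Hempty e he (w ++ v); have := Hempty e he v; rewrite /accepts => -> ->.
Qed.

Lemma final_empty f e : val f = n - 2 -> val e = n - 1 ->
  forall w, w != [::] -> dstar delta f w = e.
Proof.
case: Hdfa => _ Hreach Hmin Hempty Hbf hf he w hw.
apply: Hmin => v. rewrite (Hempty e he v).
apply/negP => acc.
case: (Hreach f) => y hy.
have a1 : accepts delta q0 y by rewrite /accepts hy hf.
have a2 : accepts delta q0 (y ++ (w ++ v)) by rewrite /accepts dstar_cat hy dstar_cat.
have hne : w ++ v != [::] by move: hw; rewrite -!size_eq0 size_cat; case: (size w).
by case: (Hbf _ _ _ a1 a2 hne).
Qed.

Lemma collide_contra r e w : inQM r -> val e = n - 1 ->
  dstar delta q0 w = dstar delta r w -> dstar delta r w = e.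
Proof.
move=> hr he hw.
case: (Hdfa) => hq0 Hreach Hmin Hempty Hbf.
apply: Hmin => v. rewrite (Hempty e he v).
apply/negP => acc.
case: (Hreach r) => y hy.
have a1 : accepts delta q0 (w ++ v) by rewrite /accepts dstar_cat hw.
have a2 : accepts delta q0 (y ++ (w ++ v)) by rewrite /accepts dstar_cat hy dstar_cat.
have hne : y != [::].
  apply/eqP => y0; move: hr hy; rewrite y0 /inQM /= => hr hy; move: hr.
  by rewrite -hy hq0.
by case: (Hbf _ _ _ a1 a2 hne).
Qed.

Lemma iter_word t : inT delta t -> forall k, exists w, forall q, iter k t q = dstar delta q w.
Proof.
move=> [wt [_ Ht]]; elim=> [|k [w IH]]; first by exists [::].
by exists (w ++ wt) => q; rewrite iterS IH Ht dstar_cat.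
Qed.

End DFA.

Lemma iter_fix (T : Type) (s : T -> T) e : s e = e -> forall k, iter k s e = e.
Proof. by move=> h; elim=> //= k ->. Qed.

Lemma sink_eq n (s : 'I_n -> 'I_n) (e a b : 'I_n) : s e = e -> val e = n - 1 ->
  val b <> n - 1 -> s a = e -> tree s b a -> a = b.
Proof.
move=> se he hb sa [[|k]] // hk.
by move: hk; rewrite iterSr sa iter_fix // => heb; rewrite -heb in hb.
Qed.

Lemma closure n (s : 'I_n -> 'I_n) (D : 'I_n -> Prop) :
  (is_orbit s D \/ is_tree s D) -> forall x m, D (iter m s x) -> D x.
Proof.
move=> [[b Eb]|[b [_ Eb]]] x m.
- move/Eb=> [i [j H]]; apply/Eb; exists (i + m), j; by rewrite iterD.
- move/Eb=> [i H]; apply/Eb; exists (i + m); by rewrite iterD.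
Qed.

Theorem mainTheorem11 (n : nat) (A : finType) (delta : 'I_n -> A -> 'I_n)
  (q0 : 'I_n) (Hdfa : bifix_min_dfa delta q0)
  (t th s : 'I_n -> 'I_n)
  (Ht : inT delta t) (Hth : inT delta th) (Hs : inW s)
  (C Ch : 'I_n -> Prop)
  (HC : is_orbit s C \/ is_tree s C)
  (HCh : is_orbit s Ch \/ is_tree s Ch)
  (H1 : forall q, inQM q -> t q <> s q -> C q)
  (H2 : forall q, inQM q -> th q <> s q -> Ch q)
  (H3 : exists i j : nat, exists p q : 'I_n,
          [/\ colliding delta p q, C p, C q &
              focuses (fun x => iter j t (iter i s x)) p q]) :
  ((forall x, C x -> Ch x) \/ (forall x, Ch x -> C x)) /\
  ((is_orbit s C /\ is_orbit s Ch) \/ (is_sink_tree s C /\ is_sink_tree s Ch) ->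
     same_set C Ch).
Proof.
have Hd := Hdfa.
case: Hdfa => hq0 Hreach Hmin Hempty Hbf.
have n2 : 2 <= n.
  case: (leqP 2 n) => // hn.
  have := Hempty q0 (_ : val q0 = n - 1) [::].
  rewrite /accepts /= hq0; have := ltn_ord q0; rewrite hq0.
  have -> : n - 2 = 0 by lia.
  by move=> _ h; have := h (_ : 0 = n - 1) => //; lia.
have hn1 : n - 1 < n by lia.
have hn2 : n - 2 < n by lia.
pose e := Ordinal hn1. pose f := Ordinal hn2.
have he : val e = n - 1 by [].
have hf : val f = n - 2 by [].
case: Hs => [[Hs0 Hse Hsf _] _].
have sE : s e = e by apply: val_inj; exact: Hse.
have sF : s f = e by apply: val_inj; exact: Hsf.
have thE : th e = e.
  case: Hth => w [_ Hw]; rewrite Hw; exact: (empty_fix Hd).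
have thF : th f = e.
  case: Hth => w [hw Hw]; rewrite Hw; exact: (final_empty Hd).
have Hn : (forall x, C x -> Ch x) \/ (forall x, Ch x -> C x).
  case: H3 => i [j [p [q [[hpq hp hq [u [Hu [z [r [hz hr Hzr]]]]]] Cp Cq [r' [hr' [fp fq]]]]]]].
  have : Ch p \/ Ch q.
    apply: NNPP => hnot.
    have np : forall m, ~ Ch (iter m s p) by move=> m /(closure HCh); tauto.
    have nq : forall m, ~ Ch (iter m s q) by move=> m /(closure HCh); tauto.
    have agree : forall x, inQM x -> (forall m, ~ Ch (iter m s x)) ->
        forall k, iter k th x = iter k s x.
      move=> x hx hnc; elim=> // k IH.
      rewrite !iterS IH.
      have : [\/ iter k s x = e, iter k s x = f, inQM (iter k s x) |
                 val (iter k s x) = 0].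
        have := ltn_ord (iter k s x); rewrite /inQM.
        case: (iter k s x) => v hv /= _.
        case: (ltnP (n - 3) v) => h3.
        - case: (v =P n - 1) => h1; first by constructor 1; apply: val_inj.
          by constructor 2; apply: val_inj => /=; lia.
        - case: v hv h3 => [|v] hv h3; first by constructor 4.
          by constructor 3.
      case=> [->|->|hy|hy]; rewrite ?thE ?sE ?thF ?sF //.
      - by apply: NNPP => neq; apply: (hnc k); exact: H2.
      - case: k IH hy => [|k] _ /=.
        + move: hx; rewrite /inQM => /andP[h _] h0.
          by move: h; change (\val x) with (nat_of_ord x); rewrite h0.
        + by move/Hs0.
    have [wu [_ Hwu]] := Hu.
    have [wth Hwth] := iter_word Hth i.
    have [wt Hwt] := iter_word Ht j.
    pose W := wu ++ wth ++ wt.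
    have HW x : dstar delta x W = iter j t (iter i th (u x)).
      by rewrite /W !dstar_cat -Hwu -Hwth -Hwt.
    have zq : z = q0 by apply: val_inj; rewrite hz hq0.
    have Hp' : iter i th p = iter i s p by apply: agree.
    have Hq' : iter i th q = iter i s q by apply: agree.
    have key : dstar delta q0 W = dstar delta r W /\ dstar delta r W = r'.
      rewrite !HW -zq.
      by case: Hzr => [[-> ->]|[-> ->]]; rewrite Hp' Hq' fp fq.
    case: key => k1 k2.
    have := collide_contra Hd hr he k1; rewrite k2 => hre.
    move: hr'; rewrite hre /inQM he; case=> [/andP[h1 h2]|h]; lia.
  by case=> [/(nest HC HCh Cp)|/(nest HC HCh Cq)].
split=> //.
case=> [[[a Ea] [b Eb]]|[[a [ha hsa _ Ea]] [b [hb hsb _ Eb]]]].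
- have [y [Cy Chy]] : exists y, C y /\ Ch y.
    case: Hn => H.
    + have Ca : C a by apply/Ea; exists 0, 0.
      by exists a; split; [exact: Ca | exact: H].
    + have Cb : Ch b by apply/Eb; exists 0, 0.
      by exists b; split; [exact: H | exact: Cb].
  move/Ea: Cy => Oa. move/Eb: Chy => Ob.
  move=> x; split.
  + by move/Ea => hx; apply/Eb; apply: (orbit_sub Oa Ob).
  + by move/Eb => hx; apply/Ea; apply: (orbit_sub Ob Oa).
- have sa : s a = e by apply: val_inj.
  have sb : s b = e by apply: val_inj.
  have ab : a = b.
    case: Hn => H.
    + apply: (sink_eq sE he hb sa); apply/Eb; apply: H; apply/Ea; by exists 0.
    + apply/esym; apply: (sink_eq sE he ha sb); apply/Ea; apply: H; apply/Eb; by exists 0.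
  subst b => x; split=> [/Ea h | /Eb h]; [apply/Eb | apply/Ea]; exact: h.
Qed.
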